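(* Let $K\ge2$, $\eta>0$, and let $\mathbf r\in\mathbb R^K$ be a mean reward vector with no ties, i.e. $r(a)\ne r(a')$ whenever $a\ne a'$; let $a^*=\arg\max_a r(a)$. For $\boldsymbol\theta\in\mathbb R^K$ let $\pi_{\boldsymbol\theta}$ be the softmax policy $\pi_{\boldsymbol\theta}(a)=e^{\theta(a)}/\sum_b e^{\theta(b)}$ and $\Phi_\eta(\boldsymbol\theta)=\pi_{\boldsymbol\theta}^\top\mathbf r+\frac1\eta\sum_a\log\pi_{\boldsymbol\theta}(a)$. Then for all $\boldsymbol\theta\in\mathbb R^K$, $$\|\nabla_{\boldsymbol\theta}\Phi_\eta(\boldsymbol\theta)\|_2\ge\Big(\pi_{\boldsymbol\theta}(a^* )\big(r(a^* )-\pi_{\boldsymbol\theta}^\top\mathbf r\big)-\frac K\eta\Big)^+ ,$$ where $(x)^+=\max\{0,x\}$.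
   Context: Setting: $K$-armed bandit with mean rewards $\mathbf r$; $\Phi_\eta$ is the log-barrier regularized objective. *)

(* Defs.v *)
From HB Require Import structures.
From mathcomp Require Import all_boot all_order all_algebra.
From mathcomp Require Import all_classical all_reals all_analysis.
Set Implicit Arguments. Unset Strict Implicit. Unset Printing Implicit Defensive.
Import Order.TTheory GRing.Theory Num.Theory.
Local Open Scope ring_scope.

Definition softmax (R : realType) (K : nat) (theta : 'rV[R]_K) (a : 'I_K) : R :=
  expR (theta 0 a) / \sum_(b < K) expR (theta 0 b).

Definition expected_reward (R : realType) (K : nat) (theta r : 'rV[R]_K) : R :=
  \sum_(a < K) softmax theta a * r 0 a.

Definition Phi (R : realType) (K : nat) (eta : R) (r theta : 'rV[R]_K) : R :=
  expected_reward theta r + eta^-1 * \sum_(a < K) ln (softmax theta a).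

Definition partial (R : realType) (K : nat) (f : 'rV[R]_K -> R)
  (theta : 'rV[R]_K) (a : 'I_K) : R :=
  derive1 (fun t : R => f (theta + t *: delta_mx 0 a)) 0.

Definition grad_norm (R : realType) (K : nat) (f : 'rV[R]_K -> R)
  (theta : 'rV[R]_K) : R :=
  Num.sqrt (\sum_(a < K) (partial f theta a) ^+ 2).

(* Main.v *)
Require Import Defs.
From HB Require Import structures.
From mathcomp Require Import all_boot all_order all_algebra.
From mathcomp Require Import all_classical all_reals all_analysis.
From mathcomp Require Import ring lra.
Import Order.TTheory GRing.Theory Num.Theory.
Local Open Scope ring_scope.

Section S.
Variables (R : realType) (K : nat) (theta : 'rV[R]_K) (astar : 'I_K) (r : 'rV[R]_K) (eta : R).
Let th (t : R) := (theta + t *: delta_mx 0 astar).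
Let E := expR (theta 0 astar).
Let B := \sum_(b | b != astar) expR (theta 0 b).
Let A := \sum_(b | b != astar) expR (theta 0 b) * r 0 b.
Let C := \sum_b theta 0 b.
Let S t := B + E * expR t.

Lemma xE t b : th t 0 b = theta 0 b + (if b == astar then t else 0).
Proof.
rewrite /th !mxE eqxx /= eq_sym; case: eqP => _; by rewrite ?mulr1 ?mulr0.
Qed.

Lemma B_ge0 : 0 <= B.
Proof. by apply: sumr_ge0 => b _; exact/ltW/expR_gt0. Qed.

Lemma S_gt0 t : 0 < S t.
Proof. by rewrite /S ltr_wpDl ?B_ge0 // mulr_gt0 // expR_gt0. Qed.

Lemma sumS t : \sum_b expR (th t 0 b) = S t.
Proof.
rewrite (bigD1 astar) //= xE eqxx expRD addrC /S /B /E; congr (_ + _).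
by apply: eq_bigr => b /negPf hb; rewrite xE hb addr0.
Qed.

Lemma sumN t : \sum_b expR (th t 0 b) * r 0 b = A + E * expR t * r 0 astar.
Proof.
rewrite (bigD1 astar) //= xE eqxx expRD addrC /A /E; congr (_ + _).
by apply: eq_bigr => b /negPf hb; rewrite xE hb addr0.
Qed.

Lemma sumth t : \sum_b th t 0 b = C + t.
Proof.
rewrite (bigD1 astar) //= xE eqxx /C [in RHS](bigD1 astar) //= addrAC; congr (_ + _ + _).
by apply: eq_bigr => b /negPf hb; rewrite xE hb addr0.
Qed.

Lemma softmaxE t b : softmax (th t) b = expR (th t 0 b) / S t.
Proof. by rewrite /softmax sumS. Qed.

Lemma PhiE t : Phi eta r (th t) =
  (A + E * expR t * r 0 astar) * (S t)^-1 + eta^-1 * (C + t - K%:R * ln (S t)).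
Proof.
rewrite /Phi /expected_reward; congr (_ + _).
  rewrite -sumN mulr_suml; apply: eq_bigr => b _.
  by rewrite softmaxE mulrAC.
congr (_ * _).
under eq_bigr => b _ do rewrite softmaxE ln_div ?posrE ?expR_gt0 ?S_gt0 // expRK.
by rewrite sumrB sumth sumr_const card_ord mulr_natl.
Qed.


Lemma derPhi : partial (Phi eta r) theta astar =
  (A + E * r 0 astar) * (- (S 0) ^- 2 * E) + (S 0)^-1 * (E * r 0 astar)
  + eta^-1 * (1 - K%:R * ((S 0)^-1 * E)).
Proof.
pose dc (a : R) := @is_derive_cst R R^o R^o a 0 1.
pose did := @is_derive_id R R^o 0 1.
rewrite /partial.
have -> : (fun t => Phi eta r (theta + t *: delta_mx 0 astar)) =
  (fun t => (A + E * expR t * r 0 astar) * (S t)^-1 + eta^-1 * (C + t - K%:R * ln (S t))).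
  by apply: funext => t; exact: PhiE.
have hE : is_derive (0:R) 1 (fun t : R => E * expR t) E.
  have := is_deriveZ E (is_derive_expR (0:R)).
  by rewrite expR0 /GRing.scale /= mulr1.
have hS : is_derive (0:R) 1 S E.
  have := is_deriveD (dc B) hE.
  by rewrite add0r.
have hN : is_derive (0:R) 1 (fun t : R => A + E * expR t * r 0 astar) (E * r 0 astar).
  have := is_deriveD (dc A) (is_deriveM hE (dc (r 0 astar))).
  by rewrite /GRing.scale /= mulr0 add0r add0r (mulrC (r 0 astar) E).
have hV : is_derive (0:R) 1 (fun t => (S t)^-1) (- (S 0) ^- 2 * E).
  exact: is_deriveV (lt0r_neq0 (S_gt0 0)) hS.
have hL : is_derive (0:R) 1 (fun t => ln (S t)) ((S 0)^-1 * E).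
  exact: is_derive1_comp (is_derive1_ln (S_gt0 0)) hS.
have := is_deriveD (is_deriveM hN hV)
  (is_deriveZ eta^-1 (is_deriveB (is_deriveD (dc C) did)
     (is_deriveZ K%:R hL))).
move=> D; rewrite derive1E; case: D => _ ->.
by rewrite /GRing.scale /= add0r expR0 mulr1.
Qed.

Lemma th0 : th 0 = theta.
Proof. by rewrite /th scale0r addr0. Qed.

Lemma pi0 : softmax theta astar = E / S 0.
Proof. by rewrite -th0 softmaxE xE eqxx addr0. Qed.

Lemma er0 : expected_reward theta r = (A + E * r 0 astar) / S 0.
Proof.
rewrite /expected_reward; have := sumN 0; rewrite expR0 mulr1 th0 => <-.
rewrite mulr_suml; apply: eq_bigr => b _; by rewrite -th0 softmaxE mulrAC.
Qed.

Lemma main_ineq : 0 < eta ->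
  softmax theta astar * (r 0 astar - expected_reward theta r) - K%:R / eta
  <= partial (Phi eta r) theta astar.
Proof.
move=> eta0.
have S0 := S_gt0 0.
have p1 : E / S 0 <= 1.
  by rewrite ler_pdivrMr // mul1r /S ler_wpDl ?B_ge0 // expR0 mulr1.
rewrite derPhi pi0 er0.
set p := E / S 0.
have -> : (A + E * r 0 astar) * (- S 0 ^- 2 * E) + (S 0)^-1 * (E * r 0 astar)
   = p * (r 0 astar - (A + E * r 0 astar) / S 0).
  rewrite /p; field; exact: lt0r_neq0.
have -> : (S 0)^-1 * E = p by rewrite mulrC.
rewrite lerD2l -mulNr [eta^-1 * _]mulrC; apply: ler_wpM2r; first by rewrite invr_ge0 ltW.
have : 0 <= K%:R * (1 - p) by apply: mulr_ge0; rewrite ?subr_ge0.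
lra.
Qed.
End S.

Theorem lemma4p2 (R : realType) (K : nat) (eta : R) (r : 'rV[R]_K)
  (astar : 'I_K) :
  (2 <= K)%N -> 0 < eta ->
  (forall a a' : 'I_K, a != a' -> r 0 a != r 0 a') ->
  (forall a : 'I_K, a != astar -> r 0 a < r 0 astar) ->
  forall theta : 'rV[R]_K,
    Num.max 0 (softmax theta astar * (r 0 astar - expected_reward theta r)
               - K%:R / eta)
    <= grad_norm (Phi eta r) theta.
Proof.
move=> _ eta0 _ _ theta.
have H := @main_ineq R K theta astar r eta eta0.
have G : `|partial (Phi eta r) theta astar| <= grad_norm (Phi eta r) theta.
  rewrite /grad_norm -sqrtr_sqr; apply: ler_wsqrtr.
  rewrite (bigD1 astar) //= lerDl; apply: sumr_ge0 => b _; exact: sqr_ge0.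
rewrite ge_max; apply/andP; split.
  exact: le_trans (normr_ge0 _) G.
exact: le_trans H (le_trans (ler_norm _) G).
Qed.
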